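(* Let $n$ be a positive integer and let $\frac{a_1}{b_1} < \frac{a_2}{b_2} < \cdots$ be the Farey sequence of order $n$. If $k < l$ are indices with $$l - k \le \frac{n}{12}\left(1 - \frac{4}{n^{1/3}}\right),$$ then $(a_l - a_k)(b_l - b_k) \ge 0$, i.e. $\frac{a_k}{b_k}$ and $\frac{a_l}{b_l}$ are similarly ordered.
   Context: The Farey sequence of order $n$ is the increasing list of all reduced fractions $\frac{a}{b}$ with $0 \le \frac{a}{b} \le 1$ and $1 \le b \le n$ (including $\frac01$ and $\frac11$), each written in lowest terms, indexed in increasing order. Two fractions $\frac{a}{b}, \frac{a'}{b'}$ in lowest terms are called similarly ordered if $(a'-a)(b'-b) \ge 0$. *)

(* Defs.v *)
From Stdlib Require Import Reals ZArith.
From mathcomp Require Import all_boot.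

(* p <= q as rationals (denominators positive): p.1 * q.2 <= q.1 * p.2 *)
Definition frac_le (p q : nat * nat) : bool := (p.1 * q.2 <= q.1 * p.2)%N.

(* All reduced fractions a/b with 0 <= a <= b and 1 <= b <= n
   (lowest terms: coprime a b; note 0/b is reduced iff b = 1). *)
Definition farey_fracs (n : nat) : seq (nat * nat) :=
  [seq p <- [seq (a, b) | b <- iota 1 n, a <- iota 0 b.+1] | coprime p.1 p.2].

(* The Farey sequence of order n, listed in increasing order (0-based). *)
Definition farey (n : nat) : seq (nat * nat) := sort frac_le (farey_fracs n).

Definition farey_num (n i : nat) : nat := (nth (0, 1) (farey n) i).1.
Definition farey_den (n i : nat) : nat := (nth (0, 1) (farey n) i).2.

Example farey5 : farey 5 = [:: (0,1);(1,5);(1,4);(1,3);(2,5);(1,2);(3,5);(2,3);(3,4);(4,5);(1,1)].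
Proof. vm_compute. reflexivity. Qed.

(* Main.v *)
Require Import Defs.
From Stdlib Require Import Reals ZArith Lra Lia Psatz.
From mathcomp Require Import all_boot zify.

Lemma farey_fracs_mem n a b :
  ((a, b) \in farey_fracs n) = [&& (0 < b)%N, (b <= n)%N, (a <= b)%N & coprime a b].
Proof.
rewrite /farey_fracs mem_filter.
apply/andP/and4P.
- case=> hc /allpairsPdep [b0 [a0 [hb ha [ea eb]]]].
  subst a0 b0.
  move: hb ha; rewrite !mem_iota => hb ha. split => //; lia.
- case=> h1 h2 h3 h4. split => //. apply/allpairsPdep. exists b, a. rewrite !mem_iota. split => //; lia.
Qed.

Lemma farey_mem n p :
  (p \in farey n) = [&& (0 < p.2)%N, (p.2 <= n)%N, (p.1 <= p.2)%N & coprime p.1 p.2].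
Proof. by case: p => a b; rewrite /farey mem_sort farey_fracs_mem. Qed.

Lemma farey_uniq n : uniq (farey n).
Proof.
rewrite /farey sort_uniq /farey_fracs filter_uniq //.
apply: allpairs_uniq_dep.
- exact: iota_uniq.
- move=> b _; exact: iota_uniq.
- move=> [x1 y1] [x2 y2] _ _ /= [-> ->]. by [].
Qed.

Lemma frac_le_total : total frac_le.
Proof. move=> p q; rewrite /frac_le; exact: leq_total. Qed.

Lemma farey_sorted n : sorted frac_le (farey n).
Proof. exact: sort_sorted frac_le_total _. Qed.

Notation FN n i := (nth (0,1) (farey n) i).

Lemma reduced_eq (p q : nat * nat) : p.1 * q.2 = q.1 * p.2 -> coprime p.1 p.2 ->
  coprime q.1 q.2 -> 0 < p.2 -> 0 < q.2 -> p = q.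
Proof.
case: p q => [p1 p2] [q1 q2] /= e cp cq hp hq.
have d1 : p2 %| q2.
  have : p2 %| p1 * q2 by rewrite e dvdn_mull.
  by rewrite Gauss_dvdr // coprime_sym.
have d2 : q2 %| p2.
  have : q2 %| q1 * p2 by rewrite -e dvdn_mull.
  by rewrite Gauss_dvdr // coprime_sym.
have e2 : p2 = q2 by apply/eqP; rewrite eqn_dvd d1 d2.
subst q2. have : p1 = q1 by apply/eqP; rewrite -(eqn_pmul2r hp) e.
by move=> ->.
Qed.

Lemma farey_nthP n i : i < size (farey n) ->
  [&& 0 < (FN n i).2, (FN n i).2 <= n, (FN n i).1 <= (FN n i).2 & coprime (FN n i).1 (FN n i).2].
Proof. by move=> h; rewrite -farey_mem mem_nth. Qed.

Lemma farey_le n i j : i <= j -> j < size (farey n) -> frac_le (FN n i) (FN n j).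
Proof.
move=> hij hj.
have tr : {in [pred p : nat * nat | 0 < p.2] & &, transitive frac_le}.
  move=> q p r /= hq _ _; rewrite /frac_le => h1 h2.
  rewrite -(leq_pmul2l hq). nia.
have rf : {in [pred p : nat * nat | 0 < p.2], reflexive frac_le}.
  by move=> p _; rewrite /frac_le.
have al : all [pred p : nat * nat | 0 < p.2] (farey n).
  by apply/allP => p; rewrite farey_mem => /and4P [].
apply: (sorted_leq_nth_in tr rf (0,1) al (farey_sorted n)) => //; rewrite inE /=; lia.
Qed.
Arguments farey_le {n i j}.
Arguments reduced_eq {p q}.
Arguments farey_nthP {n i}.

Lemma farey_lt n i j : i < j -> j < size (farey n) ->
  (FN n i).1 * (FN n j).2 < (FN n j).1 * (FN n i).2.
Proof.
move=> hij hj.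
have hi : i < size (farey n) by apply: ltn_trans hj.
have le := farey_le (ltnW hij) hj. rewrite /frac_le in le.
rewrite ltn_neqAle le andbT. apply/negP => /eqP e.
move: (farey_nthP hi) (farey_nthP hj) => /and4P [a1 a2 a3 a4] /and4P [b1 b2 b3 b4].
have := reduced_eq e a4 b4 a1 b1 => /eqP.
rewrite nth_uniq // ?farey_uniq //. move=> /eqP h. lia.
Qed.

Arguments farey_lt {n i j}.

Lemma index_between n p i j : p \in farey n -> i < j -> j < size (farey n) ->
  (FN n i).1 * p.2 < p.1 * (FN n i).2 -> p.1 * (FN n j).2 < (FN n j).1 * p.2 ->
  i < index p (farey n) < j.
Proof.
move=> hp hij hj h1 h2.
have ht : index p (farey n) < size (farey n) by rewrite index_mem.
have et : FN n (index p (farey n)) = p by apply: nth_index.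
apply/andP; split.
- rewrite ltnNge; apply/negP => le.
  have := farey_le le (ltn_trans hij hj). by rewrite et /frac_le leqNgt h1.
- rewrite ltnNge; apply/negP => le.
  have := farey_le le ht. by rewrite et /frac_le leqNgt h2.
Qed.

Lemma farey_succ n i : i.+1 < size (farey n) ->
  (FN n i.+1).1 * (FN n i).2 = (FN n i).1 * (FN n i.+1).2 + 1 /\
  n < (FN n i).2 + (FN n i.+1).2.
Proof.
move=> hs.
have hi : i < size (farey n) by apply: ltn_trans hs.
have hlt := farey_lt (ltnSn i) hs.
move: (farey_nthP hi) (farey_nthP hs) hlt.
case E1: (FN n i) => [a b]; case E2: (FN n i.+1) => [a' b'] /=.
move=> /and4P [hb hbn hab cab] /and4P [hb' hbn' hab' cab'] hlt.
have aLb : a < b.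
  rewrite ltn_neqAle hab andbT; apply/negP => /eqP e; subst a.
  move: cab; rewrite /coprime gcdnn => /eqP e1; subst b. lia.
have g1 : gcdn b a = 1 by rewrite gcdnC; apply/eqP.
case: (egcdnP a hb) => km kn; rewrite g1 muln1 => hkm hkn.
set r := (n - kn) %% b.
set t := (n - kn) %/ b.
have hr : r < b by rewrite ltn_pmod.
have dv : n - kn = t * b + r by rewrite /t /r -divn_eq.
set e := n - r.
set c := km + t * a.
have ee : e = kn + t * b by rewrite /e; lia.
have ce : c * b = a * e + 1 by rewrite /c ee; nia.
have he0 : 0 < e by rewrite /e; lia.
have hen : e <= n by rewrite /e; lia.
have hen2 : n < b + e by rewrite /e; lia.
have hce : c <= e.
  have : c * b <= e * b by rewrite ce; nia.
  by rewrite leq_pmul2r.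
have cop : coprime c e.
  rewrite /coprime; apply/eqP.
  have d1 : gcdn c e %| c * b by apply: dvdn_mulr; apply: dvdn_gcdl.
  have d2 : gcdn c e %| a * e by apply: dvdn_mull; apply: dvdn_gcdr.
  rewrite ce in d1. move: d1; rewrite (dvdn_addr _ d2) dvdn1 => /eqP //.
have mem : (c, e) \in farey n by rewrite farey_mem /= he0 hen hce cop.
set u := index (c, e) (farey n).
have hu : u < size (farey n) by rewrite index_mem.
have eu : FN n u = (c, e) by apply: nth_index.
have iu : i < u.
  rewrite ltnNge; apply/negP => le.
  have := farey_le le hi. rewrite eu E1 /frac_le /=. nia.
have u1 : u = i.+1.
  apply/eqP; rewrite eqn_leq iu andbT leqNgt; apply/negP => lt.
  have := farey_lt lt hu. rewrite eu E2 /= => h2.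
  have X : (b' * (c * b) = b' * (a * e) + b')%N by rewrite ce mulnDr muln1.
  nia.
move: eu; rewrite u1 E2 => [[-> ->]].
split; [by rewrite ce mulnC | lia].
Qed.

Arguments farey_succ {n i}.
Arguments index_between {n p i j}.

Definition small n i : bool := (2 * (FN n i).2 <= n)%N.


Open Scope R_scope.


Lemma div_le (x y z : R) : 0 < y -> x <= z * y -> x / y <= z.
Proof.
move=> hy h. unfold Rdiv.
have hi : 0 < / y by apply: Rinv_0_lt_compat.
have := Rmult_le_compat_r (/ y) _ _ (Rlt_le _ _ hi) h.
have -> : z * y * / y = z by field; lra.
done.
Qed.

Lemma le_div (x y z : R) : 0 < y -> z * y <= x -> z <= x / y.
Proof.
move=> hy h. unfold Rdiv.
have hi : 0 < / y by apply: Rinv_0_lt_compat.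
have := Rmult_le_compat_r (/ y) _ _ (Rlt_le _ _ hi) h.
have -> : z * y * / y = z by field; lra.
done.
Qed.

Lemma div_anti (K c d : R) : 0 <= K -> 0 < c -> c <= d -> K / d <= K / c.
Proof.
move=> hK hc hcd. unfold Rdiv. apply: Rmult_le_compat_l => //.
apply: Rinv_le_contravar => //.
Qed.

Lemma gap_real (nn a b a' b' : R) : 0 < b -> 0 < b' -> a' * b = a * b' + 1 ->
  nn + 1 <= b + b' -> 0 <= nn ->
  (nn + 1 <= 2*b -> nn + 1 <= 2*b' -> nn^2/4 * (a'/b' - a/b) <= 1) /\
  (2*b <= nn -> nn^2/4*(a'/b' - a/b) <= 1 + (nn^2/(4*b*(nn+1-b)) - 1)) /\
  (2*b' <= nn -> nn^2/4*(a'/b' - a/b) <= 1 + (nn^2/(4*b'*(nn+1-b')) - 1)).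
Proof.
move=> hb hb' e hs hn.
have -> : nn^2/4 * (a'/b' - a/b) = nn^2 / (4*b*b').
  have ea : a' = (a * b' + 1) / b.
    apply: (Rmult_eq_reg_r b); last lra. rewrite e. field. lra.
  rewrite ea. field. lra.
split; [|split].
- move=> h1 h2. apply: div_le; first nra. nra.
- move=> h. have : nn^2/(4*b*b') <= nn^2/(4*b*(nn+1-b)).
    apply: div_anti; try nra.
  lra.
- move=> h. have : nn^2/(4*b*b') <= nn^2/(4*b'*(nn+1-b')).
    have -> : 4*b*b' = 4*b'*b by ring.
    apply: div_anti; try nra.
  lra.
Qed.


Definition wv n i : R := INR (FN n i).1 / INR (FN n i).2.
Definition phi n (v : R) : R := Rmax 0 (INR n ^ 2 / (4 * v * (INR n + 1 - v)) - 1).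
Definition sph n i : R := if small n i then phi n (INR (FN n i).2) else 0.

Lemma phi_ge n v : INR n ^ 2 / (4 * v * (INR n + 1 - v)) - 1 <= phi n v.
Proof. exact: Rmax_r. Qed.
Lemma phi_ge0 n v : 0 <= phi n v.
Proof. exact: Rmax_l. Qed.
Lemma sph_ge0 n i : 0 <= sph n i.
Proof. rewrite /sph; case: small => //; [exact: phi_ge0 | lra]. Qed.

Lemma INR_leq m k : (m <= k)%N -> INR m <= INR k.
Proof. move=> h; apply: le_INR; exact/leP. Qed.
Arguments INR_leq {m k}.

Lemma gap {n i} : (i.+1 < size (farey n))%N ->
  INR n ^ 2 / 4 * (wv n i.+1 - wv n i) <= 1 + sph n i + sph n i.+1.
Proof.
move=> hs.
have hi : (i < size (farey n))%N by apply: ltn_trans hs.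
have [e s] := farey_succ hs.
move: (farey_nthP hi) (farey_nthP hs) e s.
rewrite /sph /wv /small.
case: (FN n i) => a b; case: (FN n i.+1) => a' b' /=.
move=> /and4P [hb hbn hab cab] /and4P [hb' hbn' hab' cab'] e s.
have eR : INR a' * INR b = INR a * INR b' + 1.
  have := f_equal INR e. by rewrite plus_INR !mult_INR.
have sR : INR n + 1 <= INR b + INR b'.
  have := INR_leq s. rewrite plus_INR S_INR. lra.
have hbR : 0 < INR b by apply: lt_0_INR; apply/ltP.
have hbR' : 0 < INR b' by apply: lt_0_INR; apply/ltP.
have hn : 0 <= INR n by apply: pos_INR.
have [G1 [G2 G3]] := gap_real (INR n) (INR a) (INR b) (INR a') (INR b') hbR hbR' eR sR hn.
have P1 := phi_ge n (INR b). have P2 := phi_ge n (INR b').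
have Q1 := phi_ge0 n (INR b). have Q2 := phi_ge0 n (INR b').
case: (leqP (2 * b) n) => h1; case: (leqP (2 * b') n) => h2.
- exfalso. lia.
- have h1R := INR_leq h1. rewrite mult_INR /= in h1R.
  have h2R := INR_leq h2. rewrite mult_INR S_INR /= in h2R.
  have := G2 ltac:(lra). lra.
- have h1R := INR_leq h1. rewrite mult_INR S_INR /= in h1R.
  have h2R := INR_leq h2. rewrite mult_INR /= in h2R.
  have := G3 ltac:(lra). lra.
- have h1R := INR_leq h1. rewrite mult_INR S_INR /= in h1R.
  have h2R := INR_leq h2. rewrite mult_INR S_INR /= in h2R.
  have := G1 ltac:(lra) ltac:(lra). lra.
Qed.


Lemma seg n d i : (i + d.+1 < size (farey n))%N ->
  (forall t, (i < t)%N -> (t < i + d.+1)%N -> small n t = false) ->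
  INR n ^ 2 / 4 * (wv n (i + d.+1) - wv n i) - sph n i - sph n (i + d.+1) <= INR d.+1.
Proof.
elim: d i => [|d IH] i hs hint.
- rewrite addn1 in hs *. have := gap hs. rewrite /=. lra.
- have hs1 : ((i.+1) + d.+1 < size (farey n))%N by rewrite addSnnS.
  have hint1 : forall t, (i.+1 < t)%N -> (t < i.+1 + d.+1)%N -> small n t = false.
    move=> t h1 h2; apply: hint; lia.
  have IH1 := IH i.+1 hs1 hint1.
  have hsi : (i.+1 < size (farey n))%N by lia.
  have G := gap hsi.
  have s1 : sph n i.+1 = 0 by rewrite /sph hint //; lia.
  rewrite -addSnnS. rewrite s1 in G IH1.
  rewrite S_INR. lra.
Qed.

Lemma phi_bound (nn a : R) : 1 <= a -> 2*a <= nn ->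
  Rmax 0 (nn^2/(4*a*(nn+1-a)) - 1) <= (nn - 2*a)/(4*a).
Proof.
move=> ha hn.
apply: Rmax_lub.
- apply: Rmult_le_pos; [lra|]. apply: Rlt_le; apply: Rinv_0_lt_compat; lra.
- have hA : 0 < nn + 1 - a by lra.
  have -> : nn^2/(4*a*(nn+1-a)) - 1 = ((nn - 2*a)^2 - 4*a)/(4*a*(nn+1-a)) by field; lra.
  have -> : (nn - 2*a)/(4*a) = ((nn - 2*a)*(nn+1-a))/(4*a*(nn+1-a)) by field; lra.
  unfold Rdiv. apply: Rmult_le_compat_r.
  + apply: Rlt_le; apply: Rinv_0_lt_compat; nra.
  + nra.
Qed.

Lemma f2_real (nn a b : R) : 1 <= a -> 1 <= b -> 2*a <= nn -> 2*b <= nn ->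
  (nn - 2*a)/(4*a) + (nn - 2*b)/(4*b) <= nn^2/(8*a*b).
Proof.
move=> ha hb h1 h2.
have -> : (nn - 2*a)/(4*a) + (nn - 2*b)/(4*b) = (2*b*(nn-2*a) + 2*a*(nn-2*b))/(8*a*b) by field; lra.
unfold Rdiv. apply: Rmult_le_compat_r.
- apply: Rlt_le; apply: Rinv_0_lt_compat; nra.
- nra.
Qed.

Lemma final1 (nn x y w v m s1 s2 : R) : 1 <= nn -> 2 <= v -> 2*v <= nn -> x <= w -> w <= y ->
  (1 + y)/nn <= y - x -> 1/v <= w ->
  0 <= s1 -> s1 <= (nn - 2*v)/(4*v) -> 0 <= s2 -> s2 <= (nn - 2*v)/(4*v) ->
  nn^2/4*(w - x) - s1 + nn^2/4*(y - w) - s2 <= m -> nn/12 <= m.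
Proof.
move=> hn hv hvn hxw hwy hL hw hs1 hs1' hs2 hs2' hm.
have e1 : nn^2/4*(w - x) + nn^2/4*(y - w) = nn^2/4*(y-x) by ring.
have L1 : nn * (1 + y) / 4 <= nn^2/4*(y-x).
  have : nn * ((1+y)/nn) <= nn * (y - x) by apply: Rmult_le_compat_l; lra.
  have -> : nn * ((1+y)/nn) = 1 + y by field; lra.
  move=> h. nra.
have hiv : (1/v) * v = 1 by field; lra.
have hiv0 : 0 < 1/v by apply: Rdiv_lt_0_compat; lra.
have E : (nn - 2*v)/(4*v) = (nn * (1/v) - 2)/4 by field; lra.
rewrite E in hs1' hs2'.
set iv := 1/v in hiv hiv0 hs1' hs2' hw.
have : iv <= 1/2 by nra.
have L2 : nn * (1 + iv) / 4 <= nn^2/4*(y-x) by nra.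
nra.
Qed.

Lemma end_term (nn x w a s : R) : 1 <= nn -> 2 <= a -> x <= w ->
  0 <= s -> s <= (nn - 2*a)/(4*a) -> (s = 0 \/ 1/(a*nn) <= w - x) ->
  nn^2/8*(w - x) - nn*(1/a)/8 <= nn^2/4*(w - x) - s.
Proof.
move=> hn ha hxw hs hs' hor.
have hia : (1/a) * a = 1 by field; lra.
have hia0 : 0 < 1/a by apply: Rdiv_lt_0_compat; lra.
have E : (nn - 2*a)/(4*a) = (nn * (1/a) - 2)/4 by field; lra.
rewrite E in hs'.
case: hor => [-> | h].
- have : 0 <= nn^2/8*(w-x) by apply: Rmult_le_pos; nra.
  nra.
- have E2 : 1/(a*nn) = (1/a)/nn by field; lra.
  rewrite E2 in h.
  have : (1/a) <= nn * (w - x).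
    have : nn * ((1/a)/nn) <= nn * (w - x) by apply: Rmult_le_compat_l; lra.
    have -> : nn * ((1/a)/nn) = 1/a by field; lra.
    done.
  move=> h2. set ia := 1/a in hia hia0 hs' h2 *. nra.
Qed.

Lemma final2 (nn x y w1 wK a b m s1 s2 : R) : 1 <= nn -> 2 <= a -> 2 <= b ->
  (3 <= a \/ 3 <= b) -> x <= w1 -> w1 <= wK -> wK <= y ->
  (1 + y)/nn <= y - x -> 1/a <= w1 -> 1/b <= wK ->
  0 <= s1 -> s1 <= (nn - 2*a)/(4*a) -> (s1 = 0 \/ 1/(a*nn) <= w1 - x) ->
  0 <= s2 -> s2 <= (nn - 2*b)/(4*b) -> (s2 = 0 \/ 1/(b*nn) <= y - wK) ->
  nn^2/4*(w1 - x) - s1 + nn^2/8*(wK - w1) + nn^2/4*(y - wK) - s2 <= m -> nn/12 <= m.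
Proof.
move=> hn ha hb hab hx1 h1K hKy hL hw1 hwK hs1 hs1' o1 hs2 hs2' o2 hm.
have T1 := end_term nn x w1 a s1 hn ha hx1 hs1 hs1' o1.
have T2 := end_term nn wK y b s2 hn hb hKy hs2 hs2' o2.
have L1 : nn * (1 + y) / 8 <= nn^2/8*(y-x).
  have : nn * ((1+y)/nn) <= nn * (y - x) by apply: Rmult_le_compat_l; lra.
  have -> : nn * ((1+y)/nn) = 1 + y by field; lra.
  move=> h. nra.
have hia : (1/a) * a = 1 by field; lra.
have hia0 : 0 < 1/a by apply: Rdiv_lt_0_compat; lra.
have hib : (1/b) * b = 1 by field; lra.
have hib0 : 0 < 1/b by apply: Rdiv_lt_0_compat; lra.
set ia := 1/a in hia hia0 hw1 T1. set ib := 1/b in hib hib0 hwK T2.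
have : nn^2/8*(y - x) = nn^2/8*(w1-x) + nn^2/8*(wK - w1) + nn^2/8*(y - wK) by ring.
case: hab => h3.
- have : ia <= 1/3 by nra.
  nra.
- have : ib <= 1/3 by nra.
  nra.
Qed.


Lemma INR_sub {i j} : (i <= j)%N -> INR (j - i) = INR j - INR i.
Proof. move=> h. have E : INR ((j - i) + i)%N = INR (j - i) + INR i by rewrite plus_INR. rewrite subnK // in E. lra. Qed.

Lemma seg' n i j : (i < j)%N -> (j < size (farey n))%N ->
  (forall t, (i < t)%N -> (t < j)%N -> small n t = false) ->
  INR n ^ 2 / 4 * (wv n j - wv n i) - sph n i - sph n j <= INR (j - i).
Proof.
move=> hij hj hint.
have ej : j = (i + (j - i - 1).+1)%N by lia.
have := seg n (j - i - 1)%N i.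
rewrite -ej. have -> : ((j - i - 1).+1 = j - i)%N by lia.
move=> H; apply: H => //.
Qed.

Lemma wdiff_ge (ai bi aj bj : R) : 0 < bi -> 0 < bj -> ai*bj + 1 <= aj*bi ->
  1/(bi*bj) <= aj/bj - ai/bi.
Proof.
move=> h1 h2 h3.
have -> : aj/bj - ai/bi = (aj*bi - ai*bj)/(bi*bj) by field; lra.
unfold Rdiv. apply: Rmult_le_compat_r; last lra.
apply: Rlt_le; apply: Rinv_0_lt_compat; nra.
Qed.

Lemma INR_ltn m k : (m < k)%N -> INR m + 1 <= INR k.
Proof. move=> h. have := INR_leq h. rewrite S_INR. lra. Qed.
Arguments INR_ltn {m k}.

Lemma wlt n i j : (i < j)%N -> (j < size (farey n))%N ->
  1 / (INR (FN n i).2 * INR (FN n j).2) <= wv n j - wv n i.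
Proof.
move=> hij hj.
have hi : (i < size (farey n))%N by apply: ltn_trans hj.
have hlt := farey_lt hij hj.
move: (farey_nthP hi) (farey_nthP hj) hlt; rewrite /wv.
case: (FN n i) => a b; case: (FN n j) => a' b' /=.
move=> /and4P [hb _ _ _] /and4P [hb' _ _ _] hlt.
apply: wdiff_ge.
- by apply: lt_0_INR; apply/ltP.
- by apply: lt_0_INR; apply/ltP.
- have := INR_ltn hlt. by rewrite !mult_INR.
Qed.

Arguments seg' {n i j}.
Arguments wlt {n i j}.

Lemma pair n i j : (i < j)%N -> (j < size (farey n))%N -> small n i -> small n j ->
  (forall t, (i < t)%N -> (t < j)%N -> small n t = false) ->
  INR n ^ 2 / 8 * (wv n j - wv n i) <= INR (j - i).
Proof.
move=> hij hj si sj hint.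
have hi : (i < size (farey n))%N by apply: ltn_trans hj.
have S := seg' hij hj hint.
have W := wlt hij hj.
have hb : (0 < (FN n i).2)%N by case/and4P: (farey_nthP hi).
have hb' : (0 < (FN n j).2)%N by case/and4P: (farey_nthP hj).
rewrite /sph si sj in S.
have hbR : 1 <= INR (FN n i).2 by have := INR_leq hb.
have hbR' : 1 <= INR (FN n j).2 by have := INR_leq hb'.
have sR : 2 * INR (FN n i).2 <= INR n by have := INR_leq si; rewrite mult_INR.
have sR' : 2 * INR (FN n j).2 <= INR n by have := INR_leq sj; rewrite mult_INR.
have P1 := phi_bound (INR n) (INR (FN n i).2) hbR sR.
have P2 := phi_bound (INR n) (INR (FN n j).2) hbR' sR'.
have F := f2_real (INR n) (INR (FN n i).2) (INR (FN n j).2) hbR hbR' sR sR'.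
rewrite /phi in S.
set b := INR (FN n i).2 in S W P1 P2 F hbR sR.
set b' := INR (FN n j).2 in S W P1 P2 F hbR' sR'.
set wd := wv n j - wv n i in S W *.
set m := INR (j - i) in S *.
have E : INR n ^ 2 / (8 * b * b') = INR n ^ 2 / 8 * (1 / (b * b')) by field; lra.
have : INR n ^ 2 / 8 * (1 / (b * b')) <= INR n ^ 2 / 8 * wd.
  apply: Rmult_le_compat_l => //. apply: Rmult_le_pos; [apply: pow2_ge_0 | lra].
lra.
Qed.

Lemma chain n d : forall i j, (j - i <= d)%N -> (i < j)%N -> (j < size (farey n))%N ->
  small n i -> small n j -> INR n ^ 2 / 8 * (wv n j - wv n i) <= INR (j - i).
Proof.
elim: d => [|d IH] i j hd hij hj si sj.
- exfalso; lia.
- case: (boolP (has (small n) (iota i.+1 (j - i.+1)))).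
  + move=> /hasP [t]; rewrite mem_iota => ht st.
    have h1 : (i < t)%N by lia.
    have h2 : (t < j)%N by lia.
    have A := IH i t ltac:(lia) h1 (ltn_trans h2 hj) si st.
    have B := IH t j ltac:(lia) h2 hj st sj.
    rewrite (INR_sub (ltnW h1)) in A. rewrite (INR_sub (ltnW h2)) in B.
    rewrite (INR_sub (ltnW hij)). lra.
  + move=> /hasPn hn. apply: pair => // t h1 h2.
    apply/negbTE; apply: hn; rewrite mem_iota; lia.
Qed.


Lemma wmono n i j : (i <= j)%N -> (j < size (farey n))%N -> wv n i <= wv n j.
Proof.
move=> hij hj.
have hi : (i < size (farey n))%N by apply: leq_ltn_trans hj.
have := farey_le hij hj. rewrite /frac_le /wv.
move: (farey_nthP hi) (farey_nthP hj).
case: (FN n i) => a b; case: (FN n j) => a' b' /=.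
move=> /and4P [hb _ _ _] /and4P [hb' _ _ _] h.
have hR := INR_leq h. rewrite !mult_INR in hR.
have b0 : 0 < INR b by apply: lt_0_INR; apply/ltP.
have b0' : 0 < INR b' by apply: lt_0_INR; apply/ltP.
have -> : INR a / INR b = (INR a * INR b') / (INR b * INR b') by field; lra.
have -> : INR a' / INR b' = (INR a' * INR b) / (INR b * INR b') by field; lra.
unfold Rdiv. apply: Rmult_le_compat_r; last lra.
apply: Rlt_le; apply: Rinv_0_lt_compat; nra.
Qed.

Lemma wge n t : (t < size (farey n))%N -> (1 <= (FN n t).1)%N ->
  1 / INR (FN n t).2 <= wv n t.
Proof.
move=> ht ha. rewrite /wv.
have hb : (0 < (FN n t).2)%N by case/and4P: (farey_nthP ht).
have b0 : 0 < INR (FN n t).2 by apply: lt_0_INR; apply/ltP.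
have a1 : 1 <= INR (FN n t).1 by have := INR_leq ha.
unfold Rdiv. apply: Rmult_le_compat_r; [apply: Rlt_le; apply: Rinv_0_lt_compat|]; lra.
Qed.

Lemma Lbound n k l : (k < l)%N -> (l < size (farey n))%N ->
  ((FN n k).1 < (FN n l).1)%N -> ((FN n l).2 < (FN n k).2)%N ->
  (1 + wv n l) / INR n <= wv n l - wv n k.
Proof.
move=> hkl hl ha hb.
have hk : (k < size (farey n))%N by apply: ltn_trans hl.
move: (farey_nthP hk) (farey_nthP hl) ha hb; rewrite /wv.
case: (FN n k) => p q; case: (FN n l) => r s /=.
move=> /and4P [hq hqn _ _] /and4P [hs hsn _ _] ha hb.
have h1 : (r * s.+1 <= r * q)%N by rewrite leq_mul2l hb orbT.
have h2 : (p.+1 * s <= r * s)%N by rewrite leq_mul2r ha orbT.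
rewrite mulnS in h1. rewrite mulSn in h2.
have D2 : (r + s + p * s <= r * q)%N by rewrite -addnA; apply: leq_trans h1; rewrite leq_add2l.
have DR := INR_leq D2. rewrite !plus_INR !mult_INR in DR.
have q0 : 0 < INR q by apply: lt_0_INR; apply/ltP.
have s0 : 0 < INR s by apply: lt_0_INR; apply/ltP.
have qn : INR q <= INR n by apply: INR_leq.
have r0 := pos_INR r. have p0 := pos_INR p.
have -> : INR r / INR s - INR p / INR q = (INR r * INR q - INR p * INR s) / (INR q * INR s) by field; lra.
have -> : (1 + INR r / INR s) / INR n = (INR r + INR s) / (INR s * INR n) by field; lra.
have E1 : (INR r + INR s) / (INR s * INR n) <= (INR r + INR s) / (INR s * INR q).
  apply: div_anti; [nra | nra | nra].
have E2 : (INR r + INR s) / (INR s * INR q) <= (INR r * INR q - INR p * INR s) / (INR q * INR s).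
  have -> : INR s * INR q = INR q * INR s by ring.
  unfold Rdiv. apply: Rmult_le_compat_r; [apply: Rlt_le; apply: Rinv_0_lt_compat; nra | lra].
lra.
Qed.


Arguments wmono {n i j}.
Arguments wge {n t}.
Arguments chain n d {i j}.
Arguments Lbound {n k l}.

Lemma core n k l : (0 < n)%N -> (k < l)%N -> (l < size (farey n))%N ->
  ((FN n k).1 < (FN n l).1)%N -> ((FN n l).2 < (FN n k).2)%N ->
  INR n / 12 <= INR (l - k).
Proof.
move=> hn hkl hl ha hb.
have hk : (k < size (farey n))%N by apply: ltn_trans hl.
have inS : forall t, (t <= l)%N -> (t < size (farey n))%N by move=> t ht; apply: leq_ltn_trans hl.
have Pt : forall t, (t <= l)%N ->
   [&& 0 < (FN n t).2, (FN n t).2 <= n, (FN n t).1 <= (FN n t).2 & coprime (FN n t).1 (FN n t).2]%N.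
  move=> t ht; exact: farey_nthP (inS t ht).
have ak1 : (1 <= (FN n k).1)%N.
  case/and4P: (Pt k (ltnW hkl)) => hbk _ _ cop.
  case/and4P: (Pt l (leqnn l)) => hbl _ _ _.
  rewrite lt0n; apply/negP => /eqP e. rewrite e /coprime gcd0n in cop. move/eqP: cop => e1.
  rewrite e1 in hb. lia.
have at1 : forall t, (k <= t)%N -> (t <= l)%N -> (1 <= (FN n t).1)%N.
  move=> t h1 h2. have := farey_le h1 (inS t h2). rewrite /frac_le.
  case/and4P: (Pt t h2) => hbt _ _ _.
  move=> h. rewrite lt0n; apply/negP => /eqP e. rewrite e mul0n in h.
  have : (0 < (FN n k).1 * (FN n t).2)%N by rewrite muln_gt0 ak1 hbt.
  lia.
have bt2 : forall t, (k <= t)%N -> (t <= l)%N -> (2 <= (FN n t).2)%N.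
  move=> t h1 h2. case/and4P: (Pt t h2) => hbt _ hab cop.
  have a1 := at1 t h1 h2.
  rewrite ltnNge; apply/negP => hle.
  have eb : (FN n t).2 = 1%N by lia.
  have ea : (FN n t).1 = 1%N by lia.
  have := farey_le h2 (inS l (leqnn l)). rewrite /frac_le ea eb !mul1n muln1 => h.
  case/and4P: (Pt l (leqnn l)) => _ _ hal cop'.
  have eal : (FN n l).1 = (FN n l).2 by apply/eqP; rewrite eqn_leq hal h.
  rewrite eal /coprime gcdnn in cop'. move/eqP: cop' => e1.
  rewrite e1 in hb. lia.
have nn1 : 1 <= INR n by have := INR_leq hn.
have hLb := Lbound hkl hl ha hb.
have y0 : 0 <= wv n l.
  have := wge (inS l (leqnn l)) (at1 l (ltnW hkl) (leqnn l)).
  have : 0 < 1 / INR (FN n l).2.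
    apply: Rdiv_lt_0_compat; first lra. apply: lt_0_INR; apply/ltP.
    by case/and4P: (Pt l (leqnn l)).
  lra.
case: (boolP (has (small n) (iota k (l - k).+1))) => [hasS | noS].
- set P := fun t => ((k <= t <= l)%N && small n t).
  have exP : exists t, P t.
    case/hasP: hasS => t; rewrite mem_iota => ht st. exists t. rewrite /P st andbT. lia.
  case: (ex_minnP exP) => i1 /andP [/andP [ki1 i1l] si1] min1.
  have ubP : forall t, P t -> (t <= l)%N by move=> t /andP [/andP [_ h] _].
  case: (ex_maxnP exP ubP) => iK /andP [/andP [kiK iKl] siK] max1.
  have i1K : (i1 <= iK)%N by apply: min1; rewrite /P kiK iKl siK.
  have b12 : 2 <= INR (FN n i1).2 by have := INR_leq (bt2 i1 ki1 i1l).
  have bK2 : 2 <= INR (FN n iK).2 by have := INR_leq (bt2 iK kiK iKl).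
  have b1n : 2 * INR (FN n i1).2 <= INR n by have := INR_leq si1; rewrite mult_INR.
  have bKn : 2 * INR (FN n iK).2 <= INR n by have := INR_leq siK; rewrite mult_INR.
  have x1 : wv n k <= wv n i1 by apply: wmono ki1 (inS i1 i1l).
  have xK : wv n i1 <= wv n iK by apply: wmono i1K (inS iK iKl).
  have Ky : wv n iK <= wv n l by apply: wmono iKl (inS l (leqnn l)).
  have w1g : 1 / INR (FN n i1).2 <= wv n i1 by apply: wge (inS i1 i1l) (at1 i1 ki1 i1l).
  have wKg : 1 / INR (FN n iK).2 <= wv n iK by apply: wge (inS iK iKl) (at1 iK kiK iKl).
  have [s1 [hs1 hs1' o1 part1]] : exists s1, [/\ 0 <= s1, s1 <= (INR n - 2 * INR (FN n i1).2)/(4 * INR (FN n i1).2),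
      (s1 = 0 \/ 1/(INR (FN n i1).2 * INR n) <= wv n i1 - wv n k) & INR n^2/4 * (wv n i1 - wv n k) - s1 <= INR (i1 - k)].
    case: (ltngtP k i1) => [lt1 | gt1 | eq1].
    + exists (sph n i1). 
      have sk : small n k = false.
        apply/negbTE/negP => sk. have := min1 k. rewrite /P leqnn (ltnW hkl) sk /= => /(_ isT). lia.
      have hint : forall t, (k < t)%N -> (t < i1)%N -> small n t = false.
        move=> t h1 h2. apply/negbTE/negP => st. have := min1 t. rewrite /P st andbT.
        have -> : (k <= t <= l)%N by lia. move=> /(_ isT). lia.
      have S := seg' lt1 (inS i1 i1l) hint.
      rewrite /sph sk si1 in S *.
      have hb1 : 1 <= INR (FN n i1).2 by lra.
      split.
      * exact: phi_ge0.
      * exact: phi_bound.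
      * right. have W := wlt lt1 (inS i1 i1l).
        case/and4P: (Pt k (ltnW hkl)) => bk1' bkn' _ _.
        have bkn := INR_leq bkn'. have bk1 : 1 <= INR (FN n k).2 by have := INR_leq bk1'.
        have : 1 / (INR (FN n i1).2 * INR n) <= 1 / (INR (FN n k).2 * INR (FN n i1).2).
          have -> : INR (FN n k).2 * INR (FN n i1).2 = INR (FN n i1).2 * INR (FN n k).2 by ring.
          apply: div_anti; nra.
        lra.
      * rewrite /phi in S *. lra.
    + lia.
    + exists 0. split; [lra | | left => // | ].
      * apply: Rmult_le_pos; [lra | apply: Rlt_le; apply: Rinv_0_lt_compat; lra].
      * rewrite -eq1 subnn /=. lra.
  have [s2 [hs2 hs2' o2 part3]] : exists s2, [/\ 0 <= s2,
      s2 <= (INR n - 2 * INR (FN n iK).2)/(4 * INR (FN n iK).2),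
      (s2 = 0 \/ 1/(INR (FN n iK).2 * INR n) <= wv n l - wv n iK) &
      INR n^2/4 * (wv n l - wv n iK) - s2 <= INR (l - iK)].
    case: (ltngtP iK l) => [lt2 | gt2 | eq2].
    + exists (sph n iK).
      have sl : small n l = false.
        apply/negbTE/negP => sl. have := max1 l. rewrite /P leqnn (ltnW hkl) sl /= => /(_ isT). lia.
      have hint : forall t, (iK < t)%N -> (t < l)%N -> small n t = false.
        move=> t h1 h2. apply/negbTE/negP => st. have := max1 t. rewrite /P st andbT.
        have -> : (k <= t <= l)%N by lia. move=> /(_ isT). lia.
      have S := seg' lt2 hl hint.
      rewrite /sph sl siK in S *.
      have hbK : 1 <= INR (FN n iK).2 by lra.
      split.
      * exact: phi_ge0.
      * exact: phi_bound.
      * right. have W := wlt lt2 hl.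
        case/and4P: (Pt l (leqnn l)) => bl1' bln' _ _.
        have bln := INR_leq bln'. have bl1 : 1 <= INR (FN n l).2 by have := INR_leq bl1'.
        have : 1 / (INR (FN n iK).2 * INR n) <= 1 / (INR (FN n iK).2 * INR (FN n l).2).
          apply: div_anti; nra.
        lra.
      * rewrite /phi in S *. lra.
    + lia.
    + exists 0. split; [lra | | left => // | ].
      * apply: Rmult_le_pos; [lra | apply: Rlt_le; apply: Rinv_0_lt_compat; lra].
      * rewrite eq2 subnn /=. lra.
  have e : INR (l - k) = INR (i1 - k) + INR (iK - i1) + INR (l - iK).
    rewrite (INR_sub ki1) (INR_sub i1K) (INR_sub iKl) (INR_sub (ltnW hkl)). ring.
  case: (ltngtP i1 iK) => [lt | gt | eq].
  + have part2 : INR n ^2/8 * (wv n iK - wv n i1) <= INR (iK - i1).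
      apply: (chain n (iK - i1)) => //; try lia; exact: inS.
    have ab3 : 3 <= INR (FN n i1).2 \/ 3 <= INR (FN n iK).2.
      case: (leqP 3 (FN n i1).2) => h1.
        left; have := INR_leq h1; rewrite /=; lra.
      case: (leqP 3 (FN n iK).2) => h2.
        right; have := INR_leq h2; rewrite /=; lra.
      exfalso.
      have e1 : (FN n i1).2 = 2%N by have := bt2 i1 ki1 i1l; lia.
      have e2 : (FN n iK).2 = 2%N by have := bt2 iK kiK iKl; lia.
      have a1 : (FN n i1).1 = 1%N.
        case/and4P: (Pt i1 i1l) => _ _ hab cop. have := at1 i1 ki1 i1l.
        rewrite e1 in hab cop. move=> h. have : (FN n i1).1 != 2%N.
          by apply/eqP => e3; rewrite e3 in cop.
        lia.
      have a2 : (FN n iK).1 = 1%N.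
        case/and4P: (Pt iK iKl) => _ _ hab cop. have := at1 iK kiK iKl.
        rewrite e2 in hab cop. move=> h. have : (FN n iK).1 != 2%N.
          by apply/eqP => e3; rewrite e3 in cop.
        lia.
      have := farey_lt lt (inS iK iKl). rewrite e1 e2 a1 a2. done.
    apply: (final2 (INR n) (wv n k) (wv n l) (wv n i1) (wv n iK) (INR (FN n i1).2) (INR (FN n iK).2)
             (INR (l - k)) s1 s2) => //.
    rewrite e. lra.
  + lia.
  + subst iK.
    apply: (final1 (INR n) (wv n k) (wv n l) (wv n i1) (INR (FN n i1).2) (INR (l - k)) s1 s2) => //.
    rewrite e subnn /=. lra.
- have hint : forall t, (k < t)%N -> (t < l)%N -> small n t = false.
    move=> t h1 h2. apply/negbTE. apply: (hasPn noS). rewrite mem_iota. lia.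
  have sk : small n k = false.
    apply/negbTE. apply: (hasPn noS). rewrite mem_iota. lia.
  have sl : small n l = false.
    apply/negbTE. apply: (hasPn noS). rewrite mem_iota. lia.
  have S := seg' hkl hl hint.
  rewrite /sph sk sl in S.
  have : INR n * (1 + wv n l) / 4 <= INR n ^ 2 / 4 * (wv n l - wv n k).
    have : INR n * ((1 + wv n l) / INR n) <= INR n * (wv n l - wv n k).
      apply: Rmult_le_compat_l; lra.
    have -> : INR n * ((1 + wv n l) / INR n) = 1 + wv n l by field; lra.
    move=> h. nra.
  nra.
Qed.

Close Scope R_scope.

Lemma sign_lemma (p q r s : nat) : (p * s < r * q)%N ->
  ((Z.of_nat r - Z.of_nat p) * (Z.of_nat s - Z.of_nat q) < 0)%Z -> (p < r)%N /\ (s < q)%N.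
Proof.
move=> h1 h2.
have H1 : (Z.of_nat p * Z.of_nat s < Z.of_nat r * Z.of_nat q)%Z by lia.
have p0 := Nat2Z.is_nonneg p. have q0 := Nat2Z.is_nonneg q.
have r0 := Nat2Z.is_nonneg r. have s0 := Nat2Z.is_nonneg s.
case: (Z.lt_ge_cases (Z.of_nat p) (Z.of_nat r)) => c1;
case: (Z.lt_ge_cases (Z.of_nat s) (Z.of_nat q)) => c2.
- split; lia.
- exfalso. nia.
- exfalso. nia.
- exfalso. nia.
Qed.

Theorem theorem7 (n k l : nat) :
  (0 < n)%N ->
  (k < l)%N -> (l < size (farey n))%N ->
  Rle (INR (l - k)%N)
      (Rmult (Rdiv (INR n) 12) (Rminus 1 (Rdiv 4 (Rpower (INR n) (Rdiv 1 3))))) ->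
  ((Z.of_nat (farey_num n l) - Z.of_nat (farey_num n k)) *
   (Z.of_nat (farey_den n l) - Z.of_nat (farey_den n k)) >= 0)%Z.
Proof.
move=> hn hkl hl H.
rewrite /farey_num /farey_den.
case: (Z_lt_ge_dec ((Z.of_nat (FN n l).1 - Z.of_nat (FN n k).1) *
   (Z.of_nat (FN n l).2 - Z.of_nat (FN n k).2)) 0) => [hlt|hge]; last exact: hge.
exfalso.
have lt := farey_lt hkl hl.
have [ha hb] := sign_lemma _ _ _ _ lt hlt.
have C := core _ _ _ hn hkl hl ha hb.
have rp : Rlt 0 (Rpower (INR n) (Rdiv 1 3)) by rewrite /Rpower; apply: exp_pos.
have t0 : Rlt 0 (Rdiv 4 (Rpower (INR n) (Rdiv 1 3))) by apply: Rdiv_lt_0_compat; lra.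
have n0 : Rlt 0 (INR n) by apply: lt_0_INR; apply/ltP.
have : Rlt 0 (Rmult (Rdiv (INR n) 12) (Rdiv 4 (Rpower (INR n) (Rdiv 1 3)))).
  apply: Rmult_lt_0_compat => //; lra.
move: H C. set t := Rdiv 4 (Rpower (INR n) (Rdiv 1 3)). move=> H C h. 
rewrite Rmult_minus_distr_l Rmult_1_r in H. lra.
Qed.
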